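(* Let $\mathbf M$ be the Wright–Fisher matrix and $\phi(x)=x\log x$ (with $\phi(0)=0$). For every $\mathbf p\in\Delta^N$ with $\langle\mathbf u^{(1)},\mathbf p\rangle>0$, one has $E(\mathbf M\mathbf p)\le E(\mathbf p)$; consequently $n\mapsto E(\mathbf M^n\mathbf p)$ is non-increasing.
   Context: Fix $N\ge2$ and $(\mathsf s_0,\dots,\mathsf s_N)$ with $\mathsf s_0=0$, $\mathsf s_N=1$ and $0<\mathsf s_j<1$ for $1\le j\le N-1$. The Wright–Fisher matrix is $\mathbf M=(M_{ij})_{i,j=0}^N$ with $M_{ij}=\binom Ni\mathsf s_j^{\,i}(1-\mathsf s_j)^{N-i}$ (column-stochastic; probability vectors evolve by $\mathbf p\mapsto\mathbf M\mathbf p$). Its core $(M_{ij})_{i,j=1}^{N-1}$ is a positive matrix; let $\mu_1>0$ be its Perron eigenvalue and $\mathbf u^{(1)}=(u^{(1)}_i)_{i=1}^{N-1}$, $\mathbf v^{(1)}=(v^{(1)}_i)_{i=1}^{N-1}$ its positive left and right Perron eigenvectors, normalized by $\sum_iv^{(1)}_i=1$, $\sum_iu^{(1)}_iv^{(1)}_i=1$. Let $\Delta^N=\{\mathbf x\in\mathbb R^{N+1}:x_i\ge0,\sum_ix_i=1\}$, $\langle\mathbf u^{(1)},\mathbf p\rangle=\sum_{i=1}^{N-1}u^{(1)}_ip_i$, and for $\langle\mathbf u^{(1)},\mathbf p\rangle>0$, $E(\mathbf p)=\sum_{i=1}^{N-1}\phi\!\left(\frac{p_i}{v^{(1)}_i\langle\mathbf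 u^{(1)},\mathbf p\rangle}\right)v^{(1)}_iu^{(1)}_i$. *)

(* Defs.v *)
From HB Require Import structures.
From mathcomp Require Import all_boot all_order all_algebra.
From mathcomp Require Import all_classical all_reals all_analysis.
Set Implicit Arguments. Unset Strict Implicit. Unset Printing Implicit Defensive.
Import Order.TTheory GRing.Theory Num.Theory.
Local Open Scope ring_scope.

Definition core_idx (N : nat) (i : 'I_N.+1) : bool := (0 < i)%N && (i < N)%N.

Definition WF_matrix {R : realType} (N : nat) (s : 'I_N.+1 -> R) : 'M[R]_N.+1 :=
  \matrix_(i, j) ('C(N, i)%:R * s j ^+ i * (1 - s j) ^+ (N - i)).

Definition phi {R : realType} (x : R) : R := if x == 0 then 0 else x * ln x.

(* Perron data of the core (M_ij)_{i,j=1}^{N-1}: mu > 0, u, v positive left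
   and right eigenvectors for mu, normalized by sum v = 1, sum u v = 1.
   (Entries of u, v at indices 0 and N are irrelevant.) *)
Definition perron_data {R : realType} (N : nat) (M : 'M[R]_N.+1)
  (mu : R) (u v : 'I_N.+1 -> R) : Prop :=
  0 < mu /\
      (forall i, core_idx i -> 0 < u i /\ 0 < v i) /\
      (forall j, core_idx j ->
         \sum_(i < N.+1 | core_idx i) u i * M i j = mu * u j) /\
      (forall i, core_idx i ->
         \sum_(j < N.+1 | core_idx j) M i j * v j = mu * v i) /\
      \sum_(i < N.+1 | core_idx i) v i = 1 /\
      \sum_(i < N.+1 | core_idx i) u i * v i = 1.

Definition in_simplex {R : realType} (N : nat) (p : 'cV[R]_N.+1) : Prop :=
  (forall i, 0 <= p i 0) /\ \sum_i p i 0 = 1.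

Definition upair {R : realType} (N : nat) (u : 'I_N.+1 -> R) (p : 'cV[R]_N.+1) : R :=
  \sum_(i < N.+1 | core_idx i) u i * p i 0.

Definition Efun {R : realType} (N : nat) (u v : 'I_N.+1 -> R) (p : 'cV[R]_N.+1) : R :=
  \sum_(i < N.+1 | core_idx i)
     phi (p i 0 / (v i * upair u p)) * v i * u i.

(* Main.v *)
Require Import Defs.
From HB Require Import structures.
From mathcomp Require Import all_boot all_order all_algebra.
From mathcomp Require Import all_classical all_reals all_analysis.
From mathcomp Require Import ring lra zify.
Import Order.TTheory GRing.Theory Num.Theory.
Local Open Scope ring_scope.

Lemma ln_le_sub1 {R : realType} (t : R) : 0 < t -> ln t <= t - 1.
Proof.
move=> t0; have := expR_ge1Dx (ln t); rewrite lnK ?posrE //; lra.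
Qed.

Lemma phi_tangent (R : realType) (y m : R) : 0 <= y -> 0 < m ->
  y * (ln m + 1) - m <= phi y.
Proof.
move=> y0 m0; rewrite /phi; case: eqP => [->|/eqP yn0]; first by lra.
have yp : 0 < y by rewrite lt_neqAle eq_sym yn0.
have h := @ln_le_sub1 _ (m / y) (divr_gt0 m0 yp).
rewrite ln_div ?posrE // in h.
have : y * (ln m - ln y) <= y * (m / y - 1) by rewrite ler_pM2l.
rewrite mulrBr mulrBr mulr1 (mulrC m) mulrA divff ?mul1r //; lra.
Qed.

Lemma jensen_phi (R : realType) (I : finType) (P : pred I) (w x : I -> R) :
  (forall j, P j -> 0 <= w j) -> (forall j, P j -> 0 <= x j) ->
  \sum_(j | P j) w j = 1 ->
  phi (\sum_(j | P j) w j * x j) <= \sum_(j | P j) w j * phi (x j).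
Proof.
move=> w0 x0 w1.
set m := \sum_(j | P j) w j * x j.
have m0 : 0 <= m by apply: sumr_ge0 => j Pj; rewrite mulr_ge0 ?w0 ?x0.
case: (eqVneq m 0) => [mz|mn0].
  rewrite mz /phi eqxx; apply: sumr_ge0 => j Pj.
  have := psumr_eq0P (fun j Pj => mulr_ge0 (w0 j Pj) (x0 j Pj)) mz Pj.
  move/eqP; rewrite mulf_eq0 => /orP[/eqP->|/eqP->]; first by rewrite mul0r.
  by rewrite eqxx mulr0.
have mp : 0 < m by rewrite lt_neqAle eq_sym mn0.
apply: (@le_trans _ _ (\sum_(j | P j) (w j * x j * (ln m + 1) - w j * m))).
  rewrite sumrB -mulr_suml -mulr_suml w1 mul1r /phi (negbTE mn0) -/m.
  lra.
apply: ler_sum => j Pj; rewrite -mulrA -mulrBr.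
by apply: ler_wpM2l; [exact: w0 | exact: phi_tangent (x0 j Pj) mp].
Qed.

Section WF.
Variables (R : realType) (N : nat) (s : 'I_N.+1 -> R) (mu : R) (u v : 'I_N.+1 -> R).
Hypotheses (s0 : s ord0 = 0) (sN : s ord_max = 1)
  (sc : forall j, core_idx j -> 0 < s j < 1)
  (PD : perron_data (WF_matrix s) mu u v).
Local Notation M := (WF_matrix s).

Lemma idx_cases (j : 'I_N.+1) : [\/ j = ord0, j = ord_max | core_idx j].
Proof.
rewrite /core_idx; case: (posnP j) => [j0|jp].
  by apply: Or31; apply: val_inj.
case: (ltnP j N) => [jN|jN]; first by apply: Or33; apply/andP.
apply: Or32; apply: val_inj => /=; have := ltn_ord j; lia.
Qed.

Lemma s_bnd j : 0 <= s j <= 1.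
Proof.
case: (idx_cases j) => [->|->|/sc /andP[a b]]; rewrite ?s0 ?sN ?lexx ?ler01 //.
by rewrite !ltW.
Qed.

Lemma M_ge0 i j : 0 <= M i j.
Proof.
rewrite mxE; have /andP[a b] := s_bnd j.
by rewrite !mulr_ge0 ?exprn_ge0 ?subr_ge0.
Qed.

Lemma M_zero i j : core_idx i -> ~~ core_idx j -> M i j = 0.
Proof.
move=> ci cj; rewrite mxE.
move: ci; rewrite /core_idx => /andP[i0 iN].
case: (idx_cases j) => [->|->|cj']; last by rewrite cj' in cj.
  by rewrite s0 expr0n; case: (nat_of_ord i) i0 => //= k _; rewrite mulr0 mul0r.
rewrite sN subrr expr0n; case E: (N - i)%N => [|k]; first by move: E; lia.
by rewrite mulr0.
Qed.

Lemma Mq_core (q : 'cV[R]_N.+1) i : core_idx i ->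
  (M *m q) i 0 = \sum_(j < N.+1 | core_idx j) M i j * q j 0.
Proof.
move=> ci; rewrite mxE [RHS]big_mkcond /=; apply: eq_bigr => j _.
by case: ifP => // /negbT cj; rewrite M_zero // mul0r.
Qed.

Lemma upair_M (q : 'cV[R]_N.+1) : upair u (M *m q) = mu * upair u q.
Proof.
case: PD => [_ [_ [Hu _]]].
rewrite /upair.
transitivity (\sum_(i < N.+1 | core_idx i) \sum_(j < N.+1 | core_idx j) u i * M i j * q j 0).
  apply: eq_bigr => i ci; rewrite Mq_core // mulr_sumr; apply: eq_bigr => j _.
  by rewrite mulrA.
rewrite exchange_big mulr_sumr /=; apply: eq_bigr => j cj.
by rewrite -mulr_suml Hu // mulrA.
Qed.

Lemma step (q : 'cV[R]_N.+1) : (forall j, core_idx j -> 0 <= q j 0) ->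
  0 < upair u q -> Efun u v (M *m q) <= Efun u v q.
Proof.
move=> q0 a0.
case: PD => [mu0 [uv0 [Hu [Hv [_ _]]]]].
set a := upair u q.
set x := fun j => q j 0 / (v j * a).
set K := fun i j => M i j * v j / (mu * v i).
have Kx : forall i, core_idx i ->
   (M *m q) i 0 / (v i * upair u (M *m q)) = \sum_(j < N.+1 | core_idx j) K i j * x j.
  move=> i ci; rewrite upair_M -/a Mq_core // mulr_suml; apply: eq_bigr => j cj.
  have [_ vi] := uv0 i ci; have [_ vj] := uv0 j cj.
  rewrite /K /x; field.
  by rewrite !gt_eqF.
have Kphi : forall i, core_idx i ->
   phi ((M *m q) i 0 / (v i * upair u (M *m q))) <=
   \sum_(j < N.+1 | core_idx j) K i j * phi (x j).
  move=> i ci; rewrite Kx //; have [_ vi] := uv0 i ci; apply: jensen_phi.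
  - move=> j cj; have [_ vj] := uv0 j cj.
    by rewrite /K divr_ge0 ?mulr_ge0 ?M_ge0 ?ltW // mulr_gt0.
  - move=> j cj; have [_ vj] := uv0 j cj.
    by rewrite /x divr_ge0 ?q0 // mulr_ge0 ?ltW.
  - rewrite /K -mulr_suml Hv // divff //.
    by rewrite mulf_neq0 ?gt_eqF.
rewrite /Efun.
apply: (@le_trans _ _ (\sum_(i < N.+1 | core_idx i)
   (\sum_(j < N.+1 | core_idx j) K i j * phi (x j)) * v i * u i)).
  apply: ler_sum => i ci; have [ui vi] := uv0 i ci.
  by apply: ler_wpM2r; [exact: ltW|apply: ler_wpM2r; [exact: ltW|exact: Kphi]].
rewrite le_eqVlt; apply/orP; left; apply/eqP.
transitivity (\sum_(i < N.+1 | core_idx i) \sum_(j < N.+1 | core_idx j)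
   (u i * M i j) * (phi (x j) * v j / mu)).
  apply: eq_bigr => i ci; rewrite !mulr_suml; apply: eq_bigr => j cj.
  have [ui vi] := uv0 i ci.
  rewrite /K; field; by rewrite ?gt_eqF.
rewrite exchange_big /=; apply: eq_bigr => j cj.
rewrite -mulr_suml Hu // -/(x j).
field; by rewrite gt_eqF.
Qed.

End WF.

Theorem mainTheorem10 (R : realType) (N : nat) (s : 'I_N.+1 -> R)
  (mu : R) (u v : 'I_N.+1 -> R) (p : 'cV[R]_N.+1) :
  (2 <= N)%N ->
  s ord0 = 0 -> s ord_max = 1 ->
  (forall j, core_idx j -> 0 < s j < 1) ->
  perron_data (WF_matrix s) mu u v ->
  in_simplex p ->
  0 < upair u p ->
  Efun u v (WF_matrix s *m p) <= Efun u v p /\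
  (forall n : nat,
     Efun u v (WF_matrix s ^+ n.+1 *m p) <= Efun u v (WF_matrix s ^+ n *m p)).
Proof.
move=> _ s0 sN sc PD [p0 _] up.
have mu0 : 0 < mu by case: PD.
have Mn : forall n, WF_matrix s ^+ n.+1 *m p = WF_matrix s *m (WF_matrix s ^+ n *m p).
  by move=> n; rewrite exprS -mulmxE mulmxA.
have nn : forall n i, 0 <= (WF_matrix s ^+ n *m p) i 0.
  elim=> [|n IH] i; first by rewrite expr0 mul1mx.
  rewrite Mn mxE; apply: sumr_ge0 => j _; rewrite mulr_ge0 //.
  exact: M_ge0.
have pos : forall n, 0 < upair u (WF_matrix s ^+ n *m p).
  elim=> [|n IH]; first by rewrite expr0 mul1mx.
  by rewrite Mn (@upair_M _ _ _ _ _ _ s0 sN PD) mulr_gt0.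
split.
  by apply: (@step _ _ _ _ _ _ s0 sN sc PD) => // j _.
move=> n; rewrite Mn; apply: (@step _ _ _ _ _ _ s0 sN sc PD) => // j _; exact: nn.
Qed.
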